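(* Let $V(K)\times\bm W(K)$ admit an $M$-decomposition with associated spaces $\widetilde V(K)=\nabla\times\bm W(K)$ and $\widetilde{\bm W}_c(K)=\nabla\times V(K)\oplus\bm W_0(K)$. Then $\dim\gamma\widetilde V^\perp(K)=\dim\widetilde V^\perp(K)$ and $\dim\gamma\widetilde{\bm W}_c^\perp(K)=\dim\widetilde{\bm W}_c^\perp(K)$, where $\gamma\widetilde V^\perp(K):=\{\bm n\times v|_{\partial K}:v\in\widetilde V^\perp(K)\}$ and $\gamma\widetilde{\bm W}_c^\perp(K):=\{\bm n\times\bm w\times\bm n|_{\partial K}:\bm w\in\widetilde{\bm W}_c^\perp(K)\}$.
   Context: $K\subset\mathbb R^2$ is a polygonal element with unit outward normal $\bm n$; $V(K)\subset H^1(K)$, $\bm W(K)\subset\bm H(\mathrm{curl};K)$ are finite-dimensional (complex) polynomial spaces and $\bm M(\partial K)$ a finite-dimensional space of vector functions on $\partial K$. Conventions: $\nabla\times\bm v=-\partial_yv_1+\partial_xv_2$, $\nabla\times p=(\partial_yp,-\partial_xp)^T$, $\bm n\times\bm v=-n_2v_1+n_1v_2$, $\bm n\times p=(n_2p,-n_1p)^T$, $\bm n\times\bm w\times\bm n:=\bm w-(\bm w\cdot\bm n)\bm n$. $\mathrm{tr}(v,\bm w):=(\bm n\times v+\bm n\times\bm w\times\bm n)|_{\partial K}$. $\bm W_0(K):=\{\bm w\in\bm W(K):\nabla\times\bm w=0 \text{ in } K,\ \bm n\times\bm w\times\bm n=\bm0\text{ on }\partial K\}$. $\perp$ denotes $L^2(K)$-orthogonal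 complement in $V(K)$ resp. $\bm W(K)$. $V(K)\times\bm W(K)$ admits an $M$-decomposition with associated spaces $\widetilde V(K)\subset V(K)$, $\widetilde{\bm W}(K)\subset\bm W(K)$ if: $\bm n\times V(K)\subset\bm M(\partial K)$, $\bm n\times\bm W(K)\times\bm n\subset\bm M(\partial K)$; $\nabla\times V(K)\subset\widetilde{\bm W}(K)$, $\nabla\times\bm W(K)\subset\widetilde V(K)$; $\mathrm{tr}:\widetilde V^\perp(K)\times\widetilde{\bm W}^\perp(K)\to\bm M(\partial K)$ is an isomorphism; and $\bm n\times\bm\mu=0$ implies $\bm\mu=\bm0$ for $\bm\mu\in\bm M(\partial K)$. *)

(* Defs.v *)
From HB Require Import structures.
From mathcomp Require Import all_boot all_order all_algebra.
From mathcomp Require Import mpoly.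
From mathcomp Require Import all_classical all_reals all_analysis.
From mathcomp Require Import complex.

Set Implicit Arguments.
Unset Strict Implicit.
Unset Printing Implicit Defensive.

Import Order.TTheory GRing.Theory Num.Theory.
Import numFieldNormedType.Exports.
Local Open Scope classical_set_scope.
Local Open Scope ring_scope.

Section LinAlg.
Variables (F : fieldType) (E : lmodType F).

Definition subspace (S : set E) : Prop :=
  S 0 /\ forall (a : F) (x y : E), S x -> S y -> S (a *: x + y).

Definition has_dim (S : set E) (d : nat) : Prop :=
  exists b : 'I_d -> E,
    [/\ forall i, S (b i),
        forall c : 'I_d -> F, \sum_(i < d) c i *: b i = 0 -> forall i, c i = 0
      & forall x, S x -> exists c : 'I_d -> F, x = \sum_(i < d) c i *: b i].

Definition findim_subspace (S : set E) : Prop :=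
  subspace S /\ exists d, has_dim S d.

End LinAlg.

Section Geometry.
Variable R : realType.

Definition cseg (a b : R * R) : set (R * R) :=
  [set x | exists t : R, 0 <= t <= 1 /\
      x = (a.1 + t * (b.1 - a.1), a.2 + t * (b.2 - a.2))].
Definition oseg (a b : R * R) : set (R * R) :=
  [set x | exists t : R, 0 < t < 1 /\
      x = (a.1 + t * (b.1 - a.1), a.2 + t * (b.2 - a.2))].

(* K is the (open) interior of the simple closed polygon with vertices
   vx 0, vx 1, ..., vx (m-1) (edges [vx i, vx (i+1 mod m)]). *)
Definition polygonal_element (K : set (R * R)) (m : nat)
    (vx : 'I_m -> R * R) : Prop :=
  [/\ (3 <= m)%N /\ injective vx,
      open K /\ connected K,
      (exists r : R, forall x, K x -> `|x.1| <= r /\ `|x.2| <= r),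
      closure K `\` K = [set x | exists i : 'I_m, cseg (vx i) (vx (ordS i)) x]
    & forall i j : 'I_m, i <> j ->
        cseg (vx i) (vx (ordS i)) `&` cseg (vx j) (vx (ordS j)) `<=`
        [set x | (x = vx j /\ j = ordS i) \/ (x = vx i /\ i = ordS j)]].

(* the boundary dK without the vertices (union of the open edges);
   the outward normal is defined there *)
Definition bdry (m : nat) (vx : 'I_m -> R * R) : set (R * R) :=
  [set x | exists i : 'I_m, oseg (vx i) (vx (ordS i)) x].

Definition outward_normal (K : set (R * R)) (m : nat) (vx : 'I_m -> R * R)
    (nrm : R * R -> R * R) : Prop :=
  forall (i : 'I_m) x, oseg (vx i) (vx (ordS i)) x ->
    [/\ (nrm x).1 ^+ 2 + (nrm x).2 ^+ 2 = 1,
        (nrm x).1 * ((vx (ordS i)).1 - (vx i).1)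
          + (nrm x).2 * ((vx (ordS i)).2 - (vx i).2) = 0
      & exists2 eps : R, 0 < eps & forall t : R, 0 < t < eps ->
          ~ K (x.1 + t * (nrm x).1, x.2 + t * (nrm x).2) /\
          K (x.1 - t * (nrm x).1, x.2 - t * (nrm x).2)].

End Geometry.

Section Fields.
Variable R : realType.

Local Notation C := (R[i]).
(* scalar complex polynomials in the two variables x (index 0), y (index 1) *)
Definition spoly := {mpoly C[2]}.
Definition vpoly := (spoly * spoly)%type.

Definition ix : 'I_2 := ord0.
Definition iy : 'I_2 := ord_max.

Definition cR (r : R) : C := Complex r 0.

Definition ev (p : spoly) (x : R * R) : C :=
  p.@[fun i : 'I_2 => if i == ix then cR x.1 else cR x.2].

Definition dx (p : spoly) : spoly := mderiv ix p.
Definition dy (p : spoly) : spoly := mderiv iy p.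

Definition curlv (w : vpoly) : spoly := - dy w.1 + dx w.2.
Definition curls (p : spoly) : vpoly := (dy p, - dx p).

Definition bfun (m : nat) (vx : 'I_m -> R * R) :=
  {x : R * R | bdry vx x} -> (C * C)%type.

Variables (m : nat) (vx : 'I_m -> R * R) (nrm : R * R -> R * R).

(* n x p = (n2 p, - n1 p) restricted to dK *)
Definition gam (p : spoly) : bfun vx :=
  fun x => (cR (nrm (sval x)).2 * ev p (sval x),
            - (cR (nrm (sval x)).1 * ev p (sval x))).

(* n x w x n = w - (w . n) n restricted to dK *)
Definition tang (w : vpoly) : bfun vx :=
  fun x => let n1 := cR (nrm (sval x)).1 in let n2 := cR (nrm (sval x)).2 in
    let wn := ev w.1 (sval x) * n1 + ev w.2 (sval x) * n2 in
    (ev w.1 (sval x) - wn * n1, ev w.2 (sval x) - wn * n2).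

Definition trc (p : spoly) (w : vpoly) : bfun vx := gam p + tang w.

Definition ncross (mu : bfun vx) (x : {x : R * R | bdry vx x}) : C :=
  - (cR (nrm (sval x)).2 * (mu x).1) + cR (nrm (sval x)).1 * (mu x).2.

Variable K : set (R * R).

Definition leb2 := ((@lebesgue_measure R) \x (@lebesgue_measure R))%E.

(* (f, 1)_{L^2(K)} = 0 for a complex-valued f, i.e. real and imaginary
   parts of the integral over K vanish *)
Definition int0 (f : R * R -> C) : Prop :=
  (\int[leb2]_(x in K) (complex.Re (f x))%:E = 0)%E /\
  (\int[leb2]_(x in K) (complex.Im (f x))%:E = 0)%E.

Definition orth_s (u v : spoly) : Prop :=
  int0 (fun x => ev u x * (ev v x)^*).
Definition orth_v (u v : vpoly) : Prop :=
  int0 (fun x => ev u.1 x * (ev v.1 x)^* + ev u.2 x * (ev v.2 x)^*).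

Definition sperp (S St : set spoly) : set spoly :=
  [set u | S u /\ forall t, St t -> orth_s u t].
Definition vperp (S St : set vpoly) : set vpoly :=
  [set u | S u /\ forall t, St t -> orth_v u t].

Definition W0 (W : set vpoly) : set vpoly :=
  [set w | W w /\ (forall x, K x -> ev (curlv w) x = 0) /\ tang w = 0].

Definition M_decomposition (V : set spoly) (W : set vpoly) (M : set (bfun vx))
    (Vt : set spoly) (Wt : set vpoly) : Prop :=
  [/\
      (subspace Vt /\ Vt `<=` V) /\ (subspace Wt /\ Wt `<=` W),
      (forall p, V p -> M (gam p)) /\ (forall w, W w -> M (tang w)),
      (forall p, V p -> Wt (curls p)) /\ (forall w, W w -> Vt (curlv w)),
      (* tr : Vt^perp x Wt^perp -> M is an isomorphism (it is linear) *)
      [/\ forall p w, sperp V Vt p -> vperp W Wt w -> M (trc p w),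
          forall p1 w1 p2 w2, sperp V Vt p1 -> vperp W Wt w1 ->
            sperp V Vt p2 -> vperp W Wt w2 ->
            trc p1 w1 = trc p2 w2 -> p1 = p2 /\ w1 = w2
        & forall mu, M mu ->
            exists p w, [/\ sperp V Vt p, vperp W Wt w & trc p w = mu]]
    &
      forall mu, M mu -> ncross mu = (fun=> 0) -> mu = 0].

Definition Vtilde (W : set vpoly) : set spoly := [set curlv w | w in W].
Definition Wtilde_c (V : set spoly) (W : set vpoly) : set vpoly :=
  [set curls p + w0 | p in V & w0 in W0 W].

End Fields.

Arguments gam {R m} vx nrm p.
Arguments tang {R m} vx nrm w.
Arguments trc {R m} vx nrm p w.
Arguments ncross {R m} vx nrm mu x.
Arguments M_decomposition {R m} vx nrm K V W M Vt Wt.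

(* Main.v *)
Require Import Defs.
From HB Require Import structures.
From mathcomp Require Import all_boot all_order all_algebra.
From mathcomp Require Import mpoly.
From mathcomp Require Import all_classical all_reals all_analysis.
From mathcomp Require Import complex.
From mathcomp Require Import ring lra.
Import Order.TTheory GRing.Theory Num.Theory.
Import numFieldNormedType.Exports.
Set Implicit Arguments.
Unset Strict Implicit.
Unset Printing Implicit Defensive.
Local Open Scope classical_set_scope.
Local Open Scope ring_scope.
Section Good.
Variables (R : realType) (K : set (R * R)).
Hypothesis mK : measurable K.
Hypothesis finK : (@leb2 R K < +oo)%E.
Hypothesis bnd : exists r : R, forall x, K x -> `|x.1| <= r /\ `|x.2| <= r.
Local Notation C := (R[i]).

Definition goodr (f : R * R -> R) :=
  measurable_fun K f /\ exists B, forall x, K x -> `|f x| <= B.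
Definition goodc (g : R * R -> C) :=
  goodr (fun x => complex.Re (g x)) /\ goodr (fun x => complex.Im (g x)).

Lemma goodr_cst c : goodr (fun=> c).
Proof. by split; [exact: measurable_cst | exists `|c|]. Qed.

Lemma goodr_fst : goodr (fun x => x.1).
Proof.
split; first by apply: measurable_funTS; exact: measurable_fst.
by case: bnd => r hr; exists r => x /hr [].
Qed.

Lemma goodr_snd : goodr (fun x => x.2).
Proof.
split; first by apply: measurable_funTS; exact: measurable_snd.
by case: bnd => r hr; exists r => x /hr [].
Qed.

Lemma goodrD f g : goodr f -> goodr g -> goodr (fun x => f x + g x).
Proof.
move=> [mf [B1 h1]] [mg [B2 h2]]; split; first exact: measurable_realfun.measurable_funD.
exists (B1 + B2) => x Kx; apply: le_trans (ler_normD _ _) _.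
by apply: lerD; [exact: h1 | exact: h2].
Qed.

Lemma goodrN f : goodr f -> goodr (fun x => - f x).
Proof.
move=> [mf [B1 h1]]; split; first exact: measurable_realfun.measurable_funN.
by exists B1 => x Kx; rewrite normrN; exact: h1.
Qed.

Lemma goodrM f g : goodr f -> goodr g -> goodr (fun x => f x * g x).
Proof.
move=> [mf [B1 h1]] [mg [B2 h2]]; split; first exact: measurable_realfun.measurable_funM.
exists (B1 * B2) => x Kx; rewrite normrM.
by apply: ler_pM => //; [exact: h1 | exact: h2].
Qed.

Lemma goodcD f g : goodc f -> goodc g -> goodc (fun x => f x + g x).
Proof.
move=> [f1 f2] [g1 g2]; split.
  by have := goodrD f1 g1; congr goodr; apply: funext => x; case: (f x); case: (g x).
by have := goodrD f2 g2; congr goodr; apply: funext => x; case: (f x); case: (g x).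
Qed.

Lemma goodcM f g : goodc f -> goodc g -> goodc (fun x => f x * g x).
Proof.
move=> [f1 f2] [g1 g2]; split.
  have := goodrD (goodrM f1 g1) (goodrN (goodrM f2 g2)).
  by congr goodr; apply: funext => x; case: (f x) => a b; case: (g x) => c d.
have := goodrD (goodrM f1 g2) (goodrM f2 g1).
by congr goodr; apply: funext => x; case: (f x) => a b; case: (g x) => c d.
Qed.

Lemma goodc_cst c : goodc (fun=> c).
Proof. by split; exact: goodr_cst. Qed.

Lemma goodc_conj f : goodc f -> goodc (fun x => (f x)^*%C).
Proof.
move=> [f1 f2]; split.
  by have := f1; congr goodr; apply: funext => x; case: (f x).
by have := goodrN f2; congr goodr; apply: funext => x; case: (f x).
Qed.

Lemma goodcX f n : goodc f -> goodc (fun x => f x ^+ n).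
Proof.
move=> hf; elim: n => [|n IH]; first exact: goodc_cst.
by have := goodcM hf IH; congr goodc; apply: funext => x; rewrite exprS.
Qed.


Lemma goodc_ev (p : spoly R) : goodc (ev p).
Proof.
elim/mpolyind: p => [|c m p _ _ IH].
  have := goodc_cst 0; congr goodc; apply: funext => x.
  by rewrite /ev meval0.
have h : ev (c *: 'X_[m] + p) =
  (fun x => c * ((cR x.1) ^+ m ix * (cR x.2) ^+ m iy) + ev p x).
  apply: funext => x; rewrite /ev mevalD mevalZ mevalX.
  rewrite big_ord_recl big_ord1 (_ : lift ord0 ord0 = iy); last exact: val_inj.
  by rewrite /ix /iy /=.
rewrite h; apply: goodcD IH; apply: goodcM; first exact: goodc_cst.
have hx : goodc (fun x => cR x.1).
  split; first exact: goodr_fst.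
  exact: goodr_cst.
have hy : goodc (fun x => cR x.2).
  split; first exact: goodr_snd.
  exact: goodr_cst.
by apply: goodcM; apply: goodcX.
Qed.

Lemma good_int f : goodr f -> (@leb2 R).-integrable K (EFin \o f).
Proof.
move=> [mf [B hB]]; apply: measurable_bounded_integrable => //.
exists B; split; first exact: num_real.
by move=> M BM x Kx; apply: le_trans (hB x Kx) (ltW BM).
Qed.

Lemma int_lin (r1 r2 : R) f1 f2 f3 : goodr f1 -> goodr f2 -> goodr f3 ->
  (\int[@leb2 R]_(x in K) (f1 x)%:E = 0)%E ->
  (\int[@leb2 R]_(x in K) (f2 x)%:E = 0)%E ->
  (\int[@leb2 R]_(x in K) (f3 x)%:E = 0)%E ->
  (\int[@leb2 R]_(x in K) (r1 * f1 x + r2 * f2 x + f3 x)%:E = 0)%E.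
Proof.
move=> g1 g2 g3 i1 i2 i3.
have I1 := good_int g1; have I2 := good_int g2; have I3 := good_int g3.
transitivity (\int[@leb2 R]_(x in K) ((r1%:E * (f1 x)%:E + r2%:E * (f2 x)%:E) + (f3 x)%:E))%E.
  by apply: eq_integral => x _; rewrite !EFinD !EFinM.
rewrite integralD //; last first.
  by apply: integrableD => //; apply: integrableZl.
rewrite integralD //; [|exact: integrableZl..].
by rewrite !integralZl // i1 i2 i3 !mule0 !adde0.
Qed.

Lemma int0_comb (a : C) f g : goodc f -> goodc g -> int0 K f -> int0 K g ->
  int0 K (fun x => a * f x + g x).
Proof.
move=> [f1 f2] [g1 g2] [i1 i2] [j1 j2]; split.
  transitivity (\int[@leb2 R]_(x in K) (complex.Re a * complex.Re (f x) +
     (- complex.Im a) * complex.Im (f x) + complex.Re (g x))%:E)%E; last first.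
    exact: int_lin.
  apply: eq_integral => x _; case: a => a b; case: (f x) => c d; case: (g x) => e h /=;
    congr (_%:E); ring.
transitivity (\int[@leb2 R]_(x in K) (complex.Re a * complex.Im (f x) +
   (complex.Im a) * complex.Re (f x) + complex.Im (g x))%:E)%E; last first.
  exact: int_lin.
apply: eq_integral => x _; case: a => a b; case: (f x) => c d; case: (g x) => e h /=;
  congr (_%:E); ring.
Qed.

Lemma int0_zero f : (forall x, f x = 0) -> int0 K f.
Proof.
move=> h; split.
  transitivity (\int[@leb2 R]_(x in K) (cst 0%E x))%E; last exact: integral0.
  by apply: eq_integral => x _; rewrite h.
transitivity (\int[@leb2 R]_(x in K) (cst 0%E x))%E; last exact: integral0.
by apply: eq_integral => x _; rewrite h.
Qed.

End Good.
Section Meas.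
Variable R : realType.

Definition box (q : rat * rat * rat) : set (R * R) :=
  [set` `]ratr q.1.1 - ratr q.2, ratr q.1.1 + ratr q.2[%R] `*`
  [set` `]ratr q.1.2 - ratr q.2, ratr q.1.2 + ratr q.2[%R].

Lemma open_meas (K : set (R * R)) : open K -> measurable K.
Proof.
move=> oK.
have -> : K = \bigcup_(q : rat * rat * rat) [set x | box q x /\ box q `<=` K].
  apply/seteqP; split; last by move=> x [q _ [bx sub]]; exact: sub.
  move=> x Kx.
  have : nbhs x K by apply: open_nbhs_nbhs; split.
  case/nbhs_ballP => e e0 H.
  have e3 : 0 < e / 3 by apply: divr_gt0.
  have [q1 hq1] : exists q : rat, ratr q \in `](x.1 - e/3), (x.1 + e/3)[ .
    by apply: rat_in_itvoo; lra.
  have [q2 hq2] : exists q : rat, ratr q \in `](x.2 - e/3), (x.2 + e/3)[ .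
    by apply: rat_in_itvoo; lra.
  have [r hr] : exists q : rat, ratr q \in `](e/3), (2 * e/3)[ .
    by apply: rat_in_itvoo; lra.
  move: hq1 hq2 hr; rewrite !in_itv /= => /andP[a1 b1] /andP[a2 b2] /andP[a3 b3].
  exists (q1, q2, r) => //; split.
    by rewrite /box /= !in_itv /=; split; apply/andP; split; lra.
  move=> y [/=]; rewrite !in_itv /= => /andP[c1 d1] /andP[c2 d2].
  apply: H; split => /=; rewrite -ball_normE /= ltr_distlC; apply/andP; split; lra.
apply: countable_bigcupT_measurable; first exact: countableP.
move=> q; have [sub|nsub] := pselect (box q `<=` K).
  rewrite (_ : [set x | _] = box q); last first.
    by apply/seteqP; split => x /=; [case|move=> bx; split].
  by apply: measurableX; exact: measurable_itv.
rewrite (_ : [set x | _] = set0) //.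
by apply/seteqP; split => x // [].
Qed.
Lemma fin_meas (K : set (R * R)) r : measurable K ->
  (forall x, K x -> `|x.1| <= r /\ `|x.2| <= r) -> (@leb2 R K < +oo)%E.
Proof.
move=> mK hK.
apply: (@le_lt_trans _ _ (@leb2 R ([set` `[-r, r]] `*` [set` `[-r, r]]))).
  apply: le_measure; rewrite ?inE //.
    by apply: measurableX; exact: measurable_itv.
  by move=> x /hK [h1 h2]; split => /=; rewrite in_itv /= -ler_norml.
rewrite /leb2 product_measure1E; [|exact: measurable_itv..].
have h : (lebesgue_measure [set` `[-r, r]%R] < +oo)%E.
  by rewrite lebesgue_measure_itv /=; case: ifP => _; rewrite -?EFinB ?ltry.
apply: lte_mul_pinfty; [exact: measure_ge0| |exact: h].
by rewrite ge0_fin_numE //; exact: measure_ge0.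
Qed.
End Meas.

Section LA.
Variables (F : fieldType) (E1 E2 : lmodType F) (f : E1 -> E2) (S : set E1).
Hypothesis flin : forall a x y, f (a *: x + y) = a *: f x + f y.
Hypothesis S0 : S 0.
Hypothesis Scl : forall a x y, S x -> S y -> S (a *: x + y).
Hypothesis finj : forall x y, S x -> S y -> f x = f y -> x = y.

Lemma f0 : f 0 = 0.
Proof.
have h := flin 1 0 0; rewrite scaler0 addr0 scale1r in h.
by apply: (addrI (f 0)); rewrite addr0 -h.
Qed.

Lemma fsum d (c : 'I_d -> F) (b : 'I_d -> E1) :
  f (\sum_(i < d) c i *: b i) = \sum_(i < d) c i *: f (b i).
Proof.
elim/big_rec2: _ => [|i y1 y2 _ <-]; first exact: f0.
by rewrite flin.
Qed.

Lemma Ssum d (c : 'I_d -> F) (b : 'I_d -> E1) :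
  (forall i, S (b i)) -> S (\sum_(i < d) c i *: b i).
Proof.
move=> hb; elim/big_rec: _ => [|i y _ Sy]; first exact: S0.
exact: Scl.
Qed.

Lemma dim_img d : has_dim [set f x | x in S] d <-> has_dim S d.
Proof.
split.
- case=> e [He Hind Hspan].
  have /choice [s hs] : forall i, exists x, S x /\ f x = e i.
    by move=> i; case: (He i) => x Sx <-; exists x.
  have hse : forall c, \sum_(i < d) c i *: e i = f (\sum_(i < d) c i *: s i).
    by move=> c; rewrite fsum; apply: eq_bigr => i _; rewrite (hs i).2.
  exists s; split.
  + by move=> i; case: (hs i).
  + by move=> c hc; apply: Hind; rewrite hse hc f0.
  + move=> x Sx; have [|c hc] := Hspan (f x); first by exists x.
    exists c; apply: finj => //; first by apply: Ssum => i; case: (hs i).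
    by rewrite hc hse.
- case=> b [Hb Hind Hspan]; exists (f \o b); split.
  + by move=> i; exists (b i).
  + move=> c hc; apply: Hind; apply: finj; [exact: Ssum|exact: S0|].
    by rewrite fsum f0.
  + move=> y [x Sx <-]; case: (Hspan x Sx) => c ->; exists c.
    by rewrite fsum.
Qed.
End LA.

Lemma fstE (A B : Type) (x : A) (y : B) : (x, y).1 = x. Proof. by []. Qed.
Lemma sndE (A B : Type) (x : A) (y : B) : (x, y).2 = y. Proof. by []. Qed.
Lemma pairE (R : realType) (a : R[i]) (u v : R[i] * R[i]) :
  a *: u + v = (a * u.1 + v.1, a * u.2 + v.2).
Proof. by case: u; case: v. Qed.
Lemma vpolyE (R : realType) (a : R[i]) (p q : vpoly R) :
  a *: p + q = (a *: p.1 + q.1, a *: p.2 + q.2).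
Proof. by case: p; case: q. Qed.
Lemma funE (T : Type) (F : fieldType) (E : lmodType F) (a : F) (f g : T -> E) x :
  (a *: f + g) x = a *: f x + g x.
Proof. by []. Qed.

Theorem lemma3p9 (R : realType) (K : set (R * R)) (m : nat)
    (vx : 'I_m -> R * R) (nrm : R * R -> R * R)
    (V : set (spoly R)) (W : set (vpoly R)) (M : set (bfun vx)) :
  polygonal_element K vx ->
  outward_normal K vx nrm ->
  findim_subspace V -> findim_subspace W -> findim_subspace M ->
  M_decomposition vx nrm K V W M (Vtilde W) (Wtilde_c vx nrm K V W) ->
  (forall d : nat,
     has_dim [set gam vx nrm p | p in sperp K V (Vtilde W)] d <->
     has_dim (sperp K V (Vtilde W)) d) /\
  (forall d : nat,
     has_dim [set tang vx nrm w | w in vperp K W (Wtilde_c vx nrm K V W)] d <->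
     has_dim (vperp K W (Wtilde_c vx nrm K V W)) d).
Proof.
move=> [_ [oK _] [r hr] _ _] _ [sV _] [sW _] _
  [_ _ _ [_ trinj _] _].
have mK := open_meas oK.
have finK := fin_meas mK hr.
have bnd : exists r : R, forall x, K x -> `|x.1| <= r /\ `|x.2| <= r by exists r.
set Vt := Vtilde W; set Wt := Wtilde_c vx nrm K V W.
have gev := goodc_ev bnd.
have gprod : forall p q : spoly R, goodc K (fun x => ev p x * (ev q x)^*%C).
  by move=> p q; apply: goodcM; [exact: gev | apply: goodc_conj; exact: gev].
have S0 : sperp K V Vt 0.
  split; first exact: sV.1.
  by move=> t _; apply: int0_zero => x; rewrite /ev meval0 mul0r.
have z1 : (0 : vpoly R).1 = 0 := erefl.
have z2 : (0 : vpoly R).2 = 0 := erefl.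
have W0' : vperp K W Wt 0.
  split; first exact: sW.1.
  by move=> t _; apply: int0_zero => x; rewrite z1 z2 /ev meval0 !mul0r addr0.
have tang0 : tang vx nrm 0 = 0.
  apply: funext => x; rewrite /tang z1 z2 /ev meval0 !(mul0r, addr0, subr0).
  by [].
have gam0 : gam vx nrm 0 = 0.
  apply: funext => x; rewrite /gam /ev meval0 !mulr0 oppr0.
  by [].
split => d.
- apply: (@dim_img _ _ _ (gam vx nrm) (sperp K V Vt) _ S0).
  + move=> a p q; apply: funext => x.
    rewrite funE pairE /gam !fstE !sndE /ev !mevalD !mevalZ.
    by congr (_, _); ring.
  + move=> a p q [Vp hp] [Vq hq]; split; first exact: sV.2.
    move=> t Vtt; rewrite /orth_s.
    have -> : (fun x => ev (a *: p + q) x * (ev t x)^*%C) =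
      (fun x => a * (ev p x * (ev t x)^*%C) + ev q x * (ev t x)^*%C).
      by apply: funext => x; rewrite /ev mevalD mevalZ; ring.
    by apply: int0_comb => //; [exact: hp | exact: hq].
  + move=> p1 p2 h1 h2 e.
    have := trinj p1 0 p2 0 h1 W0' h2 W0'.
    by rewrite /trc tang0 e => /(_ erefl) [].
- apply: (@dim_img _ _ _ (tang vx nrm) (vperp K W Wt) _ W0').
  + move=> a p q; apply: funext => x.
    rewrite funE pairE /tang vpolyE !fstE !sndE /ev !mevalD !mevalZ.
    by congr (_, _); ring.
  + move=> a p q [Wp hp] [Wq hq]; split; first exact: sW.2.
    move=> t Wtt; rewrite /orth_v.
    have -> : (fun x => ev (a *: p + q).1 x * (ev t.1 x)^*%C +
                        ev (a *: p + q).2 x * (ev t.2 x)^*%C) =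
      (fun x => a * (ev p.1 x * (ev t.1 x)^*%C + ev p.2 x * (ev t.2 x)^*%C) +
         (ev q.1 x * (ev t.1 x)^*%C + ev q.2 x * (ev t.2 x)^*%C)).
      by apply: funext => x; rewrite vpolyE !fstE !sndE /ev !mevalD !mevalZ; ring.
    apply: int0_comb => //; [apply: goodcD; exact: gprod..|exact: hp|exact: hq].
  + move=> p1 p2 h1 h2 e.
    have := trinj 0 p1 0 p2 S0 h1 S0 h2.
    by rewrite /trc gam0 e => /(_ erefl) [].
Qed.
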